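(* Let $a>0$ with $2a/\sqrt{3}<\pi/2$, let $(T,g_{hex})$ be the singular torus defined below and $\sigma$ the isometry of $(T,g_{hex})$ induced by $(x,y,z)\mapsto(-x,-y,z+\pi)$. Then for every point $m$ of $(T,g_{hex})$, $$d_{(T,g_{hex})}(m,\sigma(m))\ge\pi.$$ Moreover equality is achieved, by a geodesic contained in the surface $\theta=\theta_0$, where $(r,\theta,z)$ are cylindrical coordinates about the vertical axis through the center of the hexagonal prism containing $m$ and $\theta_0$ is the angular coordinate of $m$.
   Context: $\Delta\subset\mathbb{R}^2$ is the hexagonal lattice generated by $(2a,0)$ and $(a,a\sqrt3)$; the vertical hexagonal prisms $D_p=V_p\times\mathbb{R}$, $p\in\Delta$, with $V_p$ the Voronoi cell of $p$, pave $\mathbb{R}^3$. On $\mathbb{R}^3$ let $h=dx^2+dy^2+\cos^2\!\big(\mathrm{dist}((x,y),\Delta)\big)\,dz^2$ ($\mathrm{dist}$ Euclidean in $\mathbb{R}^2$); in $D_p$, with cylindrical coordinates $(r,\theta,z)$ centered at the axis through $p$, $h=dr^2+r^2d\theta^2+\cos^2 r\,dz^2$. $(T,g_{hex})$ is the quotient of $(\mathbb{R}^3,h)$ by the translations $(x,y,z)\mapsto(x+4a,y,z)$, $(x,y,z)\mapsto(x+2a,y+2a\sqrt3,z)$, $(x,y,z)\mapsto(x,y,z+2\pi)$. The distance $d_{(T,g_{hex})}$ is the infimum of $h$-lengths $\int (h(\gamma',\gamma'))^{1/2}dt$ of piecewise smooth curves joining the points. *)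

(* Defs.v *)
From Stdlib Require Import Reals Lra ZArith.
From Coquelicot Require Import Coquelicot.
Open Scope R_scope.

Definition R3 := (R * R * R)%type.
Definition px (P : R3) : R := fst (fst P).
Definition py (P : R3) : R := snd (fst P).
Definition pz (P : R3) : R := snd P.

Definition Delta_pt (a : R) (i j : Z) : R * R :=
  (2 * a * IZR i + a * IZR j, a * sqrt 3 * IZR j).

Definition in_Delta (a : R) (c : R * R) : Prop :=
  exists i j : Z, c = Delta_pt a i j.

Definition dist2 (p q : R * R) : R :=
  sqrt ((fst p - fst q) ^ 2 + (snd p - snd q) ^ 2).

Definition dist_Delta (a x y : R) : R :=
  real (Glb_Rbar (fun d => exists c, in_Delta a c /\ d = dist2 (x, y) c)).

Definition in_Voronoi (a : R) (c q : R * R) : Prop :=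
  in_Delta a c /\ forall d, in_Delta a d -> dist2 q c <= dist2 q d.

Definition h_speed (a : R) (P V : R3) : R :=
  sqrt (px V ^ 2 + py V ^ 2
        + (cos (dist_Delta a (px P) (py P))) ^ 2 * pz V ^ 2).

Definition C1 (f : R -> R) : Prop :=
  (forall t, ex_derive f t) /\ (forall t, continuous (Derive f) t).

Fixpoint sumR (l : nat -> R) (n : nat) : R :=
  match n with O => 0 | S k => sumR l k + l k end.

Definition ps_curve_length (a : R) (g : R -> R3) (L : R) : Prop :=
  exists (n : nat) (tt : nat -> R) (l : nat -> R),
    tt O = 0 /\ tt n = 1 /\
    (forall i, (i < n)%nat -> tt i < tt (S i)) /\
    (forall i, (i < n)%nat ->
       exists fx fy fz : R -> R,
         C1 fx /\ C1 fy /\ C1 fz /\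
         (forall t, tt i <= t <= tt (S i) -> g t = (fx t, fy t, fz t)) /\
         is_RInt (fun t => h_speed a (fx t, fy t, fz t)
                                     (Derive fx t, Derive fy t, Derive fz t))
                 (tt i) (tt (S i)) (l i)) /\
    L = sumR l n.

Definition in_T_lattice (a : R) (v : R3) : Prop :=
  exists i j k : Z,
    v = (4 * a * IZR i + 2 * a * IZR j, 2 * a * sqrt 3 * IZR j, 2 * PI * IZR k).

Definition add3 (P Q : R3) : R3 := (px P + px Q, py P + py Q, pz P + pz Q).

(* Piecewise smooth curve in R^3 from P to a lift Q + v of the class of Q. *)
Definition curve_T (a : R) (g : R -> R3) (P Q : R3) (L : R) : Prop :=
  exists v, in_T_lattice a v /\ g 0 = P /\ g 1 = add3 Q v /\
            ps_curve_length a g L.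

Definition dist_T (a : R) (P Q : R3) : R :=
  real (Glb_Rbar (fun L => exists g, curve_T a g P Q L)).

Definition sigma_hex (P : R3) : R3 := (- px P, - py P, pz P + PI).

(* Main.v *)
Require Import Defs.
From Stdlib Require Import Reals.
From Coquelicot Require Import Coquelicot.
From Stdlib Require Import Lra Lia Psatz ZArith List.
Open Scope R_scope.


Lemma glb_props (E : R -> Prop) (lo e0 : R) :
  E e0 -> (forall x, E x -> lo <= x) ->
  lo <= real (Glb_Rbar E) /\ (forall x, E x -> real (Glb_Rbar E) <= x).
Proof.
  intros He0 Hlo.
  destruct (Glb_Rbar_correct E) as [H1 H2].
  assert (A1 : Rbar_le (Glb_Rbar E) e0) by (apply H1; auto).
  assert (A2 : Rbar_le lo (Glb_Rbar E)) by (apply H2; intros x Hx; simpl; apply Hlo; auto).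
  revert A1 A2 H1. destruct (Glb_Rbar E) as [g| |]; simpl; intros A1 A2 H1; try contradiction.
  split; [exact A2|]. intros x Hx. exact (H1 x Hx).
Qed.

Lemma glb_eq (E : R -> Prop) (v : R) :
  E v -> (forall x, E x -> v <= x) -> real (Glb_Rbar E) = v.
Proof.
  intros Hv Hlo. destruct (glb_props E v v Hv Hlo) as [A B].
  specialize (B v Hv). lra.
Qed.

Lemma dist2_nonneg p q : 0 <= dist2 p q.
Proof. unfold dist2; apply sqrt_pos. Qed.

Lemma dist_Delta_le a x y c : in_Delta a c -> dist_Delta a x y <= dist2 (x,y) c.
Proof.
  intro Hc. unfold dist_Delta.
  destruct (glb_props (fun d => exists c, in_Delta a c /\ d = dist2 (x, y) c) 0 (dist2 (x,y) c))
    as [_ B].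
  - exists c; auto.
  - intros d [c' [_ ->]]. apply dist2_nonneg.
  - apply B. exists c; auto.
Qed.

Lemma dist_Delta_ge0 a x y : 0 <= dist_Delta a x y.
Proof.
  unfold dist_Delta.
  destruct (glb_props (fun d => exists c, in_Delta a c /\ d = dist2 (x, y) c) 0 (dist2 (x,y) (Delta_pt a 0 0)))
    as [A _]; auto.
  - exists (Delta_pt a 0 0); split; auto. exists 0%Z, 0%Z; auto.
  - intros d [c' [_ ->]]. apply dist2_nonneg.
Qed.

Lemma dist_Delta_vor a x y c : in_Voronoi a c (x,y) -> dist_Delta a x y = dist2 (x,y) c.
Proof.
  intros [Hc Hmin]. unfold dist_Delta. apply glb_eq.
  - exists c; auto.
  - intros d [c' [Hc' ->]]. apply Hmin; auto.
Qed.

Lemma s3_sq : sqrt 3 * sqrt 3 = 3.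
Proof. apply sqrt_sqrt; lra. Qed.
Lemma s3_pos : 0 < sqrt 3.
Proof. apply sqrt_lt_R0; lra. Qed.

Lemma tri_lemma a s al be X Y : 0 < a -> s * s = 3 -> 0 <= al -> 0 <= be -> al + be <= 1 ->
  X = 2*a*al + a*be -> Y = a*s*be ->
  X^2 + Y^2 <= 4*a^2/3 \/ (X - 2*a)^2 + Y^2 <= 4*a^2/3 \/ (X - a)^2 + (Y - a*s)^2 <= 4*a^2/3.
Proof.
  intros Ha Hs H1 H2 H3 -> ->.
  assert (E0 : (2*a*al + a*be)^2 + (a*s*be)^2 = 4*a^2*(al^2+al*be+be^2)) by (ring_simplify; rewrite ?Rmult_assoc; nra).
  assert (E1 : (2*a*al + a*be - 2*a)^2 + (a*s*be)^2 = 4*a^2*((al-1)^2+(al-1)*be+be^2)) by nra.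
  assert (E2 : (2*a*al + a*be - a)^2 + (a*s*be - a*s)^2 = 4*a^2*(al^2+al*(be-1)+(be-1)^2)) by nra.
  rewrite E0, E1, E2.
  assert (Ha2 : 0 < a^2) by nra.
  destruct (Rle_dec (al^2+al*be+be^2) (1/3)); [left; nra|].
  destruct (Rle_dec ((al-1)^2+(al-1)*be+be^2) (1/3)); [right; left; nra|].
  destruct (Rle_dec (al^2+al*(be-1)+(be-1)^2) (1/3)); [right; right; nra|].
  exfalso.
  assert (W : (1-al-be)*(al^2+al*be+be^2) + al*((al-1)^2+(al-1)*be+be^2) + be*(al^2+al*(be-1)+(be-1)^2)
             = al + be - al^2 - al*be - be^2) by ring.
  assert (P : al + be - al^2 - al*be - be^2 <= 1/3) by nra.
  nra.
Qed.

Lemma floor_ex (x : R) : exists k : Z, IZR k <= x < IZR k + 1.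
Proof.
  destruct (archimed x) as [H1 H2]. exists (up x - 1)%Z.
  rewrite minus_IZR. lra.
Qed.

Lemma cover a : 0 < a -> forall x y, exists i j : Z,
  (x - fst (Delta_pt a i j))^2 + (y - snd (Delta_pt a i j))^2 <= 4*a^2/3.
Proof.
  intros Ha x y. set (s := sqrt 3).
  assert (Hs : s * s = 3) by apply s3_sq. assert (Hs0 : 0 < s) by apply s3_pos.
  destruct (floor_ex (y / (a*s))) as [j0 Hj].
  set (be := y/(a*s) - IZR j0).
  assert (Hy : y = a*s*IZR j0 + a*s*be) by (unfold be; field; lra).
  destruct (floor_ex ((x - a*IZR j0 - a*be)/(2*a))) as [i0 Hi].
  set (al := (x - a*IZR j0 - a*be)/(2*a) - IZR i0).
  assert (Hx : x = 2*a*IZR i0 + a*IZR j0 + 2*a*al + a*be) by (unfold al; field; lra).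
  assert (Hal : 0 <= al < 1) by (unfold al; lra).
  assert (Hbe : 0 <= be < 1) by (unfold be; lra).
  unfold Delta_pt; simpl. fold s.
  destruct (Rle_dec (al + be) 1) as [Hab|Hab].
  - destruct (tri_lemma a s al be (2*a*al + a*be) (a*s*be) Ha Hs ltac:(lra) ltac:(lra) Hab eq_refl eq_refl)
      as [H|[H|H]].
    + exists i0, j0. rewrite Hx, Hy. replace (2 * a * IZR i0 + a * IZR j0 + 2 * a * al + a * be - (2 * a * IZR i0 + a * IZR j0)) with (2*a*al + a*be) by ring.
      replace (a * s * IZR j0 + a * s * be - a * s * IZR j0) with (a*s*be) by ring. exact H.
    + exists (i0+1)%Z, j0. rewrite plus_IZR. rewrite Hx, Hy.
      replace (2 * a * IZR i0 + a * IZR j0 + 2 * a * al + a * be - (2 * a * (IZR i0 + IZR 1) + a * IZR j0)) with (2*a*al + a*be - 2*a) by (simpl; ring).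
      replace (a * s * IZR j0 + a * s * be - a * s * IZR j0) with (a*s*be) by ring. exact H.
    + exists i0, (j0+1)%Z. rewrite plus_IZR. rewrite Hx, Hy.
      replace (2 * a * IZR i0 + a * IZR j0 + 2 * a * al + a * be - (2 * a * IZR i0 + a * (IZR j0 + IZR 1))) with (2*a*al + a*be - a) by (simpl; ring).
      replace (a * s * IZR j0 + a * s * be - a * s * (IZR j0 + IZR 1)) with (a*s*be - a*s) by (simpl; ring). exact H.
  - destruct (tri_lemma a s (1-al) (1-be) (2*a*(1-al) + a*(1-be)) (a*s*(1-be)) Ha Hs ltac:(lra) ltac:(lra) ltac:(lra) eq_refl eq_refl)
      as [H|[H|H]].
    + exists (i0+1)%Z, (j0+1)%Z. rewrite !plus_IZR. rewrite Hx, Hy.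
      replace (2 * a * IZR i0 + a * IZR j0 + 2 * a * al + a * be - (2 * a * (IZR i0 + IZR 1) + a * (IZR j0 + IZR 1))) with (-(2*a*(1-al) + a*(1-be))) by (simpl; ring).
      replace (a * s * IZR j0 + a * s * be - a * s * (IZR j0 + IZR 1)) with (-(a*s*(1-be))) by (simpl; ring). nra.
    + exists i0, (j0+1)%Z. rewrite !plus_IZR. rewrite Hx, Hy.
      replace (2 * a * IZR i0 + a * IZR j0 + 2 * a * al + a * be - (2 * a * IZR i0 + a * (IZR j0 + IZR 1))) with (-(2*a*(1-al) + a*(1-be) - 2*a)) by (simpl; ring).
      replace (a * s * IZR j0 + a * s * be - a * s * (IZR j0 + IZR 1)) with (-(a*s*(1-be))) by (simpl; ring). nra.
    + exists (i0+1)%Z, j0. rewrite !plus_IZR. rewrite Hx, Hy.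
      replace (2 * a * IZR i0 + a * IZR j0 + 2 * a * al + a * be - (2 * a * (IZR i0 + IZR 1) + a * IZR j0)) with (-(2*a*(1-al) + a*(1-be) - a)) by (simpl; ring).
      replace (a * s * IZR j0 + a * s * be - a * s * IZR j0) with (-(a*s*(1-be) - a*s)) by (simpl; ring). nra.
Qed.

Lemma argmin_list {T} (f : T -> R) (l : list T) (x0 : T) :
  In x0 l -> exists c, In c l /\ forall d, In d l -> f c <= f d.
Proof.
  revert x0; induction l as [|h t IH]; intros x0 H; [destruct H|].
  destruct t as [|h2 t2].
  - exists h. split; [left; auto|]. intros d [->|[]]. lra.
  - destruct (IH h2 (or_introl eq_refl)) as [c [Hc Hmin]].
    destruct (Rle_dec (f h) (f c)).
    + exists h. split; [left; auto|]. intros d [->|Hd]; [lra|]. specialize (Hmin d Hd); lra.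
    + exists c. split; [right; auto|]. intros d [->|Hd]; [lra|]. auto.
Qed.

Definition D2 a (x y : R) (ij : Z*Z) :=
  (x - fst (Delta_pt a (fst ij) (snd ij)))^2 + (y - snd (Delta_pt a (fst ij) (snd ij)))^2.

Definition offs : list (Z*Z) :=
  ((0,0)::(1,0)::(-1,0)::(0,1)::(-1,1)::(0,-1)::(1,-1)::nil)%Z.

Lemma near_offs a x y i0 j0 i j : 0 < a ->
  D2 a x y (i0,j0) <= 4*a^2/3 -> D2 a x y (i,j) <= 4*a^2/3 ->
  In ((i-i0)%Z,(j-j0)%Z) offs.
Proof.
  intros Ha H0 H1. unfold D2, Delta_pt in *; simpl in *.
  set (s := sqrt 3) in *.
  assert (Hs : s * s = 3) by apply s3_sq.
  set (k := (i - i0)%Z). set (l := (j - j0)%Z).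
  assert (Hi : IZR i = IZR i0 + IZR k) by (unfold k; rewrite minus_IZR; ring).
  assert (Hj : IZR j = IZR j0 + IZR l) by (unfold l; rewrite minus_IZR; ring).
  rewrite Hi, Hj in H1.
  set (u1 := x - (2 * a * IZR i0 + a * IZR j0)) in *.
  set (u2 := y - a * s * IZR j0) in *.
  assert (E1 : x - (2 * a * (IZR i0 + IZR k) + a * (IZR j0 + IZR l)) = u1 - a*(2*IZR k + IZR l)) by (unfold u1; ring).
  assert (E2 : y - a * s * (IZR j0 + IZR l) = u2 - a*s*IZR l) by (unfold u2; ring).
  rewrite E1, E2 in H1.
  assert (B : a^2*((2*IZR k + IZR l)^2 + 3*IZR l^2) <= 16*a^2/3).
  { clearbody u1 u2 s.
    assert (T1 : (a*(2*IZR k + IZR l))^2 <= 2*(u1 - a*(2*IZR k + IZR l))^2 + 2*u1^2)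
      by (pose proof (pow2_ge_0 (2*u1 - a*(2*IZR k + IZR l))); nra).
    assert (T2 : (a*s*IZR l)^2 <= 2*(u2 - a*s*IZR l)^2 + 2*u2^2)
      by (pose proof (pow2_ge_0 (2*u2 - a*s*IZR l)); nra).
    assert (T3 : (a*s*IZR l)^2 = a^2*(3*IZR l^2)) by (rewrite <- Hs; ring).
    nra. }
  assert (B2 : (2*IZR k + IZR l)^2 + 3*IZR l^2 < 6).
  { assert (0 < a^2) by nra.
    apply (Rmult_lt_reg_l (a^2)); [auto|]. nra. }
  assert (Z6 : ((2*k+l)*(2*k+l) + 3*(l*l) < 6)%Z).
  { apply lt_IZR. rewrite !plus_IZR, !mult_IZR, !plus_IZR, !mult_IZR. simpl. lra. }
  clearbody k l.
  assert (Hl : (l = -1 \/ l = 0 \/ l = 1)%Z) by nia.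
  destruct Hl as [-> | [-> | ->]].
  - assert (Hk : (k = 0 \/ k = 1)%Z) by nia. destruct Hk as [-> | ->]; simpl; tauto.
  - assert (Hk : (k = -1 \/ k = 0 \/ k = 1)%Z) by nia. destruct Hk as [-> | [-> | ->]]; simpl; tauto.
  - assert (Hk : (k = -1 \/ k = 0)%Z) by nia. destruct Hk as [-> | ->]; simpl; tauto.
Qed.

Lemma dist2_sq p q : dist2 p q = sqrt ((fst p - fst q)^2 + (snd p - snd q)^2).
Proof. reflexivity. Qed.

Lemma voronoi_ex a x y : 0 < a -> exists c, in_Voronoi a c (x,y).
Proof.
  intro Ha. destruct (cover a Ha x y) as [i0 [j0 H0]].
  set (cands := map (fun o => ((i0 + fst o)%Z, (j0 + snd o)%Z)) offs).
  destruct (argmin_list (D2 a x y) cands (i0,j0)) as [[ic jc] [Hin Hmin]].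
  { unfold cands; simpl; left; f_equal; lia. }
  exists (Delta_pt a ic jc). split; [exists ic, jc; auto|].
  intros d [i [j ->]].
  assert (Hc0 : D2 a x y (ic,jc) <= D2 a x y (i0,j0)).
  { apply Hmin. unfold cands; simpl; left; f_equal; lia. }
  unfold dist2; apply sqrt_le_1_alt.
  change (D2 a x y (ic,jc) <= D2 a x y (i,j)).
  destruct (Rle_dec (D2 a x y (i,j)) (4*a^2/3)) as [Hle|Hgt].
  - apply Hmin. unfold cands. apply in_map_iff.
    exists ((i-i0)%Z, (j-j0)%Z). split; [simpl; f_equal; lia|].
    apply (near_offs a x y); auto.
  - unfold D2 in *; simpl in *. lra.
Qed.

Lemma vor_seg a c1 c2 u1 u2 r s :
  in_Voronoi a (c1,c2) (c1 + r*u1, c2 + r*u2) -> u1^2 + u2^2 = 1 -> -r <= s <= r ->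
  in_Voronoi a (c1,c2) (c1 + s*u1, c2 + s*u2).
Proof.
  intros [[ic [jc Hc]] Hmin] Hu Hs. split; [exists ic, jc; auto|].
  intros d [i [j ->]].
  set (d' := Delta_pt a (2*ic - i) (2*jc - j)).
  assert (Hd' : in_Delta a d') by (exists (2*ic-i)%Z, (2*jc-j)%Z; auto).
  pose proof (Hmin _ (ex_intro _ i (ex_intro _ j eq_refl))) as H1.
  pose proof (Hmin _ Hd') as H2.
  unfold dist2 in *; cbn [fst snd] in *.
  apply sqrt_le_0 in H1; try (apply Rplus_le_le_0_compat; apply pow2_ge_0). apply sqrt_le_0 in H2; try (apply Rplus_le_le_0_compat; apply pow2_ge_0).
  apply sqrt_le_1_alt.
  unfold d', Delta_pt in *; cbn [fst snd] in *. injection Hc as Hc1 Hc2.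
  rewrite !minus_IZR, !mult_IZR in H2.
  set (e1 := c1 - (2 * a * IZR i + a * IZR j)) in *.
  set (e2 := c2 - a * sqrt 3 * IZR j) in *.
  assert (F1 : 0 <= e1^2 + e2^2 + 2*r*(u1*e1 + u2*e2)).
  { replace (c1 + r * u1 - (2 * a * IZR i + a * IZR j)) with (e1 + r*u1) in H1 by (unfold e1; ring).
    replace (c2 + r * u2 - a * sqrt 3 * IZR j) with (e2 + r*u2) in H1 by (unfold e2; ring).
    nra. }
  assert (F2 : 0 <= e1^2 + e2^2 - 2*r*(u1*e1 + u2*e2)).
  { replace (c1 + r * u1 - (2 * a * (2 * IZR ic - IZR i) + a * (2 * IZR jc - IZR j))) with (r*u1 - e1) in H2
      by (unfold e1; rewrite Hc1; ring).
    replace (c2 + r * u2 - a * sqrt 3 * (2 * IZR jc - IZR j)) with (r*u2 - e2) in H2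
      by (unfold e2; rewrite Hc2; ring).
    nra. }
  replace (c1 + s * u1 - (2 * a * IZR i + a * IZR j)) with (e1 + s*u1) by (unfold e1; ring).
  replace (c2 + s * u2 - a * sqrt 3 * IZR j) with (e2 + s*u2) by (unfold e2; ring).
  clearbody e1 e2.
  assert (G : 0 <= e1^2 + e2^2 + 2*s*(u1*e1 + u2*e2)).
  { destruct (Req_dec r 0) as [Hr0|Hr0].
    - assert (s = 0) by lra. subst. nra.
    - assert (Hr : 0 < r) by lra.
      assert (K : 0 <= 2*r*(e1^2 + e2^2 + 2*s*(u1*e1 + u2*e2))).
      { replace (2*r*(e1^2 + e2^2 + 2*s*(u1*e1 + u2*e2))) with
          ((r+s)*(e1^2 + e2^2 + 2*r*(u1*e1 + u2*e2)) + (r-s)*(e1^2 + e2^2 - 2*r*(u1*e1 + u2*e2))) by ring.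
        apply Rplus_le_le_0_compat; apply Rmult_le_pos; lra. }
      nra. }
  nra.
Qed.

Lemma dist_Delta_cov a x y : 0 < a -> dist_Delta a x y <= 2*a/sqrt 3.
Proof.
  intro Ha. destruct (cover a Ha x y) as [i [j H]].
  eapply Rle_trans; [apply (dist_Delta_le a x y (Delta_pt a i j)); exists i, j; auto|].
  unfold dist2. simpl.
  pose proof s3_pos. pose proof s3_sq.
  rewrite <- (sqrt_pow2 (2*a/sqrt 3)) by (apply Rmult_le_pos; [lra| apply Rlt_le, Rinv_0_lt_compat; lra]).
  apply sqrt_le_1_alt.
  replace ((2*a/sqrt 3)^2) with (4*a^2/3); [exact H|].
  field_simplify; [|lra]. replace (sqrt 3 ^ 2) with 3 by (simpl; lra). field.
Qed.


Lemma isd_asin x : -1 < x < 1 -> is_derive asin x (/ sqrt (1 - x^2)).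
Proof.
  intro H. apply is_derive_Reals.
  apply (derive_pt_eq_1 _ _ _ (derivable_pt_asin x H)).
  rewrite derive_pt_asin. unfold Rsqr. replace (x*x) with (x^2) by ring.
  field. apply Rgt_not_eq. apply sqrt_lt_R0. nra.
Qed.

Lemma exd_cont (f : R -> R) x : ex_derive f x -> continuous f x.
Proof. intro H. exact (@ex_derive_continuous R_AbsRing R_NormedModule f x H). Qed.

Lemma scal_R (a b : R) : scal a b = a * b.
Proof. reflexivity. Qed.

Section Geo.
Variables (r z0 : R).
Hypothesis (Hr : 0 <= r < PI/2).

Definition gW t := sin r * cos (PI*t).
Definition gS t := asin (gW t).
Definition gA := / cos r.
Definition gZ t := z0 + PI*t + atan ((gA - 1) * sin (PI*t) * cos (PI*t) / (cos (PI*t)^2 + gA * sin (PI*t)^2)).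
Definition gS' t := - PI * sin r * sin (PI*t) / sqrt (1 - gW t ^ 2).
Definition gZ' t := PI * cos r / (1 - gW t ^ 2).

Lemma cosr_pos : 0 < cos r.
Proof. apply cos_gt_0; lra. Qed.
Lemma sinr_bnd : 0 <= sin r < 1.
Proof.
  split. apply sin_ge_0; lra.
  pose proof (sin2_cos2 r). pose proof cosr_pos. pose proof (SIN_bound r). unfold Rsqr in *.
  destruct (Req_dec (sin r) 1); [|lra]. nra.
Qed.
Lemma gW_bnd t : gW t ^ 2 <= sin r ^ 2.
Proof.
  unfold gW. pose proof (COS_bound (PI*t)). pose proof sinr_bnd.
  assert (cos (PI*t) ^2 <= 1) by nra. nra.
Qed.
Lemma gW_lt t : -1 < gW t < 1.
Proof. pose proof (gW_bnd t). pose proof sinr_bnd. split; nra. Qed.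
Lemma one_m_gW t : 0 < 1 - gW t ^ 2.
Proof. pose proof (gW_lt t). nra. Qed.

Lemma gS_der t : is_derive gS t (gS' t).
Proof.
  unfold gS, gS'.
  pose proof (isd_asin (gW t) (gW_lt t)) as H.
  assert (HW : is_derive gW t (- PI * sin r * sin (PI*t))).
  { unfold gW. auto_derive; [auto|ring]. }
  pose proof (is_derive_comp asin gW t _ _ H HW) as HC.
  rewrite scal_R in HC. unfold Rdiv. exact HC.
Qed.

Lemma gZ_der t : is_derive gZ t (gZ' t).
Proof.
  unfold gZ, gZ', gW.
  pose proof cosr_pos as Hc. pose proof sinr_bnd as Hs.
  pose proof (sin2_cos2 r) as E1. pose proof (sin2_cos2 (PI*t)) as E2. unfold Rsqr in *.
  assert (HA : 1 <= gA).
  { unfold gA. rewrite <- Rinv_1. apply Rinv_le_contravar; auto.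
    pose proof (COS_bound r); lra. }
  assert (Hd : 0 < cos (PI*t)^2 + gA * sin (PI*t)^2) by nra.
  assert (HE : 0 < cos (PI*t)^2 + gA^2*sin (PI*t)^2) by nra.
  assert (HAc : gA * cos r = 1) by (unfold gA; field; lra).
  auto_derive.
  { intro Hz. nra. }
  set (C := cos (PI*t)) in *. set (S := sin (PI*t)) in *.
  clearbody C S.
  transitivity (PI * 1 + (gA-1)*PI*((C^2 - S^2)*(C^2+gA*S^2) - 2*(gA-1)*S^2*C^2) / ((C^2+gA^2*S^2)*(C^2+S^2))).
  { field. split; nra. }
  transitivity (PI*((C^2+gA^2*S^2)*(C^2+S^2) + (gA-1)*((C^2 - S^2)*(C^2+gA*S^2) - 2*(gA-1)*S^2*C^2)) / ((C^2+gA^2*S^2)*(C^2+S^2))).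
  { field. split; nra. }
  replace ((C^2+gA^2*S^2)*(C^2+S^2) + (gA-1)*((C^2 - S^2)*(C^2+gA*S^2) - 2*(gA-1)*S^2*C^2))
    with (gA*(C^2+S^2)^2) by ring.
  replace (C^2 + S^2) with 1 by lra.
  assert (E : 1 - (sin r * C)^2 = cos r^2 * (C^2 + gA^2*S^2)).
  { replace (cos r^2*(C^2+gA^2*S^2)) with (cos r^2*C^2 + (gA*cos r)^2*S^2) by ring. rewrite HAc. nra. }
  rewrite E. unfold gA in *. field. split; [lra|]. intro Hz. nra.
Qed.

Lemma gS'_cont t : continuous gS' t.
Proof.
  apply exd_cont. unfold gS'.
  pose proof (one_m_gW t) as H. unfold gW in *.
  auto_derive. repeat split; try lra. apply Rgt_not_eq. apply sqrt_lt_R0. lra.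
Qed.

Lemma gZ'_cont t : continuous gZ' t.
Proof.
  apply exd_cont. unfold gZ'.
  pose proof (one_m_gW t) as H. unfold gW in *.
  auto_derive. lra.
Qed.

Lemma gS_bnd t : - r <= gS t <= r.
Proof.
  unfold gS. pose proof (gW_bnd t) as HW. pose proof sinr_bnd.
  pose proof (asin_bound (gW t)).
  assert (Hs : sin (asin (gW t)) = gW t) by (apply sin_asin; pose proof (gW_lt t); lra).
  pose proof PI_RGT_0.
  split.
  - destruct (Rle_dec (-r) (asin (gW t))) as [|Hn]; auto. exfalso.
    assert (sin (asin (gW t)) < sin (-r)) by (apply sin_increasing_1; lra).
    rewrite sin_neg, Hs in H2. nra.
  - destruct (Rle_dec (asin (gW t)) r) as [|Hn]; auto. exfalso.
    assert (sin r < sin (asin (gW t))) by (apply sin_increasing_1; lra).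
    rewrite Hs in H2. nra.
Qed.

Lemma gS_0 : gS 0 = r.
Proof. unfold gS, gW. rewrite Rmult_0_r, cos_0, Rmult_1_r. apply asin_sin. pose proof PI_RGT_0; lra. Qed.
Lemma gS_1 : gS 1 = - r.
Proof. unfold gS, gW. rewrite Rmult_1_r, cos_PI. replace (sin r * -1) with (- sin r) by ring.
  rewrite asin_opp, asin_sin; [ring|]. pose proof PI_RGT_0; lra. Qed.
Lemma gZ_0 : gZ 0 = z0.
Proof. unfold gZ. rewrite Rmult_0_r, sin_0. replace ((gA - 1) * 0 * cos 0 / (cos 0 ^ 2 + gA * 0 ^ 2)) with 0.
  rewrite atan_0; ring. rewrite cos_0. field. Qed.
Lemma gZ_1 : gZ 1 = z0 + PI.
Proof. unfold gZ. rewrite Rmult_1_r, sin_PI, cos_PI. replace ((gA - 1) * 0 * -1 / ((-1) ^ 2 + gA * 0 ^ 2)) with 0.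
  rewrite atan_0; ring. field. Qed.

Lemma geo_speed t : gS' t ^ 2 + cos (gS t) ^ 2 * gZ' t ^ 2 = PI ^ 2.
Proof.
  unfold gS. rewrite cos_asin by (pose proof (gW_lt t); lra).
  unfold Rsqr. unfold gS', gZ'.
  pose proof (one_m_gW t) as H.
  replace (1 - gW t * gW t) with (1 - gW t ^ 2) by ring.
  set (Q := 1 - gW t ^ 2) in *.
  assert (HQ : sqrt Q ^ 2 = Q) by (rewrite <- Rsqr_pow2; apply Rsqr_sqrt; lra).
  assert (HQ2 : sqrt Q <> 0) by (apply Rgt_not_eq, sqrt_lt_R0; lra).
  replace ((- PI * sin r * sin (PI * t) / sqrt Q) ^ 2) with ((PI * sin r * sin (PI*t))^2 / (sqrt Q ^2)) by (field; auto).
  rewrite HQ.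
  replace (sqrt Q ^ 2 * (PI * cos r / Q) ^ 2) with (PI^2 * cos r ^2 / Q) by (rewrite HQ; field; lra).
  assert (E : (PI * sin r * sin (PI*t))^2 + PI^2 * cos r^2 = PI^2 * Q).
  { unfold Q, gW. pose proof (sin2_cos2 r). pose proof (sin2_cos2 (PI*t)). unfold Rsqr in *.
    replace ((PI * sin r * sin (PI*t))^2) with (PI^2 * sin r^2 * sin (PI*t)^2) by ring.
    replace (sin (PI*t) ^ 2) with (1 - cos (PI*t)^2) by lra.
    replace (cos r ^ 2) with (1 - sin r^2) by lra. ring. }
  transitivity (((PI * sin r * sin (PI*t))^2 + PI^2 * cos r^2) / Q); [field; lra|].
  rewrite E. field. lra.
Qed.
End Geo.

Lemma D_affine (g : R -> R) c u t g' : is_derive g t g' -> is_derive (fun t => c + g t * u) t (g' * u).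
Proof.
  intro H. auto_derive. exists g'; auto. change (fun x : R => g x) with g. rewrite (is_derive_unique _ _ _ H). ring.
Qed.

Lemma C1_of (f f' : R -> R) : (forall t, is_derive f t (f' t)) -> (forall t, continuous f' t) -> Defs.C1 f.
Proof.
  intros H1 H2. split.
  - intro t. exists (f' t). auto.
  - intro t. apply (continuous_ext f'); [|auto]. intro u. symmetry. apply is_derive_unique. auto.
Qed.

Lemma r_small a x y c : 0 < a -> 2 * a / sqrt 3 < PI / 2 -> in_Voronoi a c (x,y) ->
  0 <= dist2 (x,y) c < PI/2.
Proof.
  intros Ha Hs Hv. split; [apply dist2_nonneg|].
  rewrite <- (dist_Delta_vor a x y c Hv). pose proof (dist_Delta_cov a x y Ha). lra.
Qed.

Lemma unit_dir x y c1 c2 : exists u1 u2, u1^2 + u2^2 = 1 /\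
  x = c1 + dist2 (x,y) (c1,c2) * u1 /\ y = c2 + dist2 (x,y) (c1,c2) * u2.
Proof.
  set (r := dist2 (x,y) (c1,c2)).
  assert (Hr2 : r^2 = (x-c1)^2 + (y-c2)^2).
  { unfold r, dist2. cbn [fst snd]. rewrite <- Rsqr_pow2. apply Rsqr_sqrt.
    apply Rplus_le_le_0_compat; apply pow2_ge_0. }
  assert (Hr0 : 0 <= r) by apply dist2_nonneg.
  destruct (Req_dec r 0) as [H0|H0].
  - exists 1, 0. rewrite H0 in *. split; [ring|].
    replace (0^2) with 0 in Hr2 by ring.
    pose proof (pow2_ge_0 (x-c1)). pose proof (pow2_ge_0 (y-c2)).
    assert (A1 : (x-c1)^2 = 0) by lra. assert (A2 : (y-c2)^2 = 0) by lra.
    rewrite <- Rsqr_pow2 in A1, A2. apply Rsqr_0_uniq in A1. apply Rsqr_0_uniq in A2. split; lra.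
  - exists ((x-c1)/r), ((y-c2)/r). split; [|split; field; auto].
    replace (((x - c1) / r) ^ 2 + ((y - c2) / r) ^ 2) with (((x-c1)^2 + (y-c2)^2)/r^2) by (field; auto).
    rewrite <- Hr2. field. auto.
Qed.

Theorem geodesic a (ha : 0 < a) (hsmall : 2 * a / sqrt 3 < PI / 2) (x y z0 : R) (c : R * R) :
  in_Voronoi a c (x,y) ->
  exists u : R * R,
    fst u ^ 2 + snd u ^ 2 = 1 /\
    (x, y) = (fst c + dist2 (x, y) c * fst u, snd c + dist2 (x, y) c * snd u) /\
    exists g : R -> R3,
      curve_T a g (x,y,z0) (sigma_hex (x,y,z0)) PI /\
      forall t, 0 <= t <= 1 ->
        in_Voronoi a c (px (g t), py (g t)) /\
        exists s : R, (px (g t), py (g t)) = (fst c + s * fst u, snd c + s * snd u).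
Proof.
  intro Hv. destruct c as [c1 c2].
  pose proof (r_small a x y (c1,c2) ha hsmall Hv) as Hr.
  destruct (unit_dir x y c1 c2) as [u1 [u2 [Hu [Hx Hy]]]].
  set (r := dist2 (x,y) (c1,c2)) in *.
  exists (u1,u2). cbn [fst snd]. split; [auto|]. split; [rewrite <- Hx, <- Hy; auto|].
  assert (Hv' : in_Voronoi a (c1,c2) (c1 + r*u1, c2 + r*u2)) by (rewrite <- Hx, <- Hy; auto).
  set (fx := fun t => c1 + gS r t * u1).
  set (fy := fun t => c2 + gS r t * u2).
  set (fz := fun t => gZ r z0 t).
  assert (HR : 0 <= r < PI/2) by exact Hr.
  assert (Dx : forall t, is_derive fx t (gS' r t * u1)) by (intro t; apply D_affine, gS_der; auto).
  assert (Dy : forall t, is_derive fy t (gS' r t * u2)) by (intro t; apply D_affine, gS_der; auto).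
  assert (Dz : forall t, is_derive fz t (gZ' r t)) by (intro t; apply gZ_der; auto).
  assert (Cx : forall t, continuous (fun t => gS' r t * u1) t).
  { intro t. apply (continuous_mult (fun t => gS' r t) (fun _ => u1)); [apply gS'_cont; auto|apply continuous_const]. }
  assert (Cy : forall t, continuous (fun t => gS' r t * u2) t).
  { intro t. apply (continuous_mult (fun t => gS' r t) (fun _ => u2)); [apply gS'_cont; auto|apply continuous_const]. }
  assert (Cz : forall t, continuous (gZ' r) t) by (intro t; apply gZ'_cont; auto).
  assert (Hvt : forall t, in_Voronoi a (c1,c2) (fx t, fy t)).
  { intro t. unfold fx, fy. apply (vor_seg a c1 c2 u1 u2 r); auto. apply gS_bnd; auto. }
  destruct Hv as [[ic [jc Hc]] _].
  exists (fun t => (fx t, fy t, fz t)). split.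
  - exists (4 * a * IZR ic + 2 * a * IZR jc, 2 * a * sqrt 3 * IZR jc, 2 * PI * IZR 0).
    split; [exists ic, jc, 0%Z; auto|].
    unfold Delta_pt in Hc. injection Hc as Hc1 Hc2.
    split; [|split].
    + unfold fx, fy, fz. rewrite gS_0, gZ_0 by auto. apply pair_equal_spec; split; [apply pair_equal_spec; split|]; lra.
    + unfold fx, fy, fz, add3, sigma_hex, px, py, pz. cbn [fst snd].
      rewrite gS_1, gZ_1 by auto. apply pair_equal_spec; split; [apply pair_equal_spec; split|]; lra.
    + exists 1%nat, (fun i => match i with O => 0 | _ => 1 end), (fun _ => PI).
      split; [auto|]. split; [auto|]. split.
      { intros i Hi. assert (i = 0%nat) by lia. subst i. lra. }
      split; [|simpl; ring].
      intros i Hi. assert (i = 0%nat) by lia. subst i.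
      exists fx, fy, fz. split; [apply (C1_of fx _ Dx Cx)|].
      split; [apply (C1_of fy _ Dy Cy)|]. split; [apply (C1_of fz _ Dz Cz)|].
      split; [auto|].
      apply (is_RInt_ext (fun _ => PI)).
      2: { pose proof (is_RInt_const 0 1 PI) as HI. rewrite scal_R in HI. replace ((1-0)*PI) with PI in HI by ring. exact HI. }
      intros t _.
      rewrite (is_derive_unique _ _ _ (Dx t)), (is_derive_unique _ _ _ (Dy t)), (is_derive_unique _ _ _ (Dz t)).
      unfold h_speed, px, py, pz. cbn [fst snd].
      rewrite (dist_Delta_vor a _ _ _ (Hvt t)).
      assert (Hd : dist2 (fx t, fy t) (c1, c2) = Rabs (gS r t)).
      { unfold dist2, fx, fy. cbn [fst snd].
        replace ((c1 + gS r t * u1 - c1) ^ 2 + (c2 + gS r t * u2 - c2) ^ 2) with (gS r t ^ 2 * (u1^2+u2^2)) by ring.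
        rewrite Hu, Rmult_1_r, <- Rsqr_pow2. apply sqrt_Rsqr_abs. }
      rewrite Hd.
      assert (Hc : cos (Rabs (gS r t)) = cos (gS r t)).
      { unfold Rabs. destruct (Rcase_abs (gS r t)); [apply cos_neg|auto]. }
      rewrite Hc.
      replace ((gS' r t * u1) ^ 2 + (gS' r t * u2) ^ 2 + cos (gS r t) ^ 2 * gZ' r t ^ 2)
        with (gS' r t ^ 2 + cos (gS r t) ^ 2 * gZ' r t ^ 2)
        by (replace ((gS' r t * u1) ^ 2 + (gS' r t * u2) ^ 2) with (gS' r t ^2 * (u1^2+u2^2)) by ring; rewrite Hu; ring).
      rewrite geo_speed by auto. symmetry. apply sqrt_pow2. pose proof PI_RGT_0; lra.
  - intros t _. unfold px, py. cbn [fst snd]. split; [auto|].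
    exists (gS r t). reflexivity.
Qed.


Lemma CVr_cos : CV_radius cos_n = p_infty.
Proof.
  apply CV_radius_infinite_DAlembert; [apply cosn_no_R0|].
  apply is_lim_seq_Reals. exact Alembert_cos.
Qed.
Lemma CVr_sin : CV_radius sin_n = p_infty.
Proof.
  apply CV_radius_infinite_DAlembert; [apply sin_no_R0|].
  apply is_lim_seq_Reals. exact Alembert_sin.
Qed.

Definition Ci q := PSeries cos_n q.
Definition Ki q := PSeries sin_n q.
Definition Ci' q := PSeries (PS_derive cos_n) q.
Definition Ki' q := PSeries (PS_derive sin_n) q.

Lemma Ci_der q : is_derive Ci q (Ci' q).
Proof. apply is_derive_PSeries. rewrite CVr_cos. simpl; auto. Qed.
Lemma Ki_der q : is_derive Ki q (Ki' q).
Proof. apply is_derive_PSeries. rewrite CVr_sin. simpl; auto. Qed.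
Lemma Ci'_cont q : continuous Ci' q.
Proof.
  apply exd_cont. exists (PSeries (PS_derive (PS_derive cos_n)) q).
  apply is_derive_PSeries. rewrite CV_radius_derive, CVr_cos. simpl; auto.
Qed.
Lemma Ki'_cont q : continuous Ki' q.
Proof.
  apply exd_cont. exists (PSeries (PS_derive (PS_derive sin_n)) q).
  apply is_derive_PSeries. rewrite CV_radius_derive, CVr_sin. simpl; auto.
Qed.

Lemma Ci_cos x : Ci (x^2) = cos x.
Proof.
  unfold Ci. apply is_pseries_unique. apply is_pseries_Reals.
  unfold cos. destruct (exist_cos (Rsqr x)) as [l Hl].
  replace (x^2) with (Rsqr x) by (unfold Rsqr; ring). exact Hl.
Qed.
Lemma Ki_sin x : x * Ki (x^2) = sin x.
Proof.
  unfold Ki. unfold sin. destruct (exist_sin (Rsqr x)) as [l Hl].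
  f_equal. apply is_pseries_unique. apply is_pseries_Reals.
  replace (x^2) with (Rsqr x) by (unfold Rsqr; ring). exact Hl.
Qed.
Lemma Ci_0 : Ci 0 = 1.
Proof. unfold Ci. rewrite PSeries_0. unfold cos_n. simpl. field. Qed.
Lemma Ki_0 : Ki 0 = 1.
Proof. unfold Ki. rewrite PSeries_0. unfold sin_n. simpl. field. Qed.

Definition mx x := Rmax 0 x.
Definition hfun x := x - (mx x - atan (mx x)).
Definition hd x := / (1 + mx x ^ 2).

Lemma hfun_neg x : x <= 0 -> hfun x = x.
Proof. intro H. unfold hfun, mx. rewrite Rmax_left by lra. rewrite atan_0. ring. Qed.
Lemma hfun_pos x : 0 <= x -> hfun x = atan x.
Proof. intro H. unfold hfun, mx. rewrite Rmax_right by lra. ring. Qed.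

Lemma hd_bnd x : 0 < hd x <= 1.
Proof.
  unfold hd. pose proof (pow2_ge_0 (mx x)). split.
  - apply Rinv_0_lt_compat; lra.
  - rewrite <- Rinv_1. apply Rinv_le_contravar; lra.
Qed.

Lemma mx_cont x : continuous mx x.
Proof.
  apply (continuous_ext (fun y => (y + Rabs y) / 2)).
  { intro y. unfold mx, Rmax, Rabs. destruct (Rle_dec 0 y); destruct (Rcase_abs y); lra. }
  apply (continuous_mult (fun y => y + Rabs y) (fun _ => /2)); [|apply continuous_const].
  apply (continuous_plus (fun y => y) Rabs); [apply continuous_id|apply continuous_Rabs].
Qed.

Lemma hd_cont x : continuous hd x.
Proof.
  unfold hd. apply continuous_Rinv_comp.
  - apply (continuous_plus (fun _ => 1) (fun y => mx y ^ 2)); [apply continuous_const|].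
    apply (continuous_ext (fun y => mx y * mx y)); [intro y; change (mx y * mx y = mx y ^ 2); ring|].
    apply (continuous_mult mx mx); apply mx_cont.
  - pose proof (pow2_ge_0 (mx x)). lra.
Qed.

Lemma hfun_der x : is_derive hfun x (hd x).
Proof.
  destruct (Rtotal_order x 0) as [Hx|[Hx|Hx]].
  - apply (is_derive_ext_loc (fun y => y)).
    + apply (filter_imp (fun y => y < 0)); [intros y Hy; symmetry; apply hfun_neg; lra|].
      apply (open_lt 0 x Hx).
    + unfold hd, mx. rewrite Rmax_left by lra.
      replace (/ (1 + 0 ^ 2)) with 1 by (simpl; field). auto_derive; auto; ring.
  - subst x. apply is_derive_Reals. intros eps Heps.
    pose proof (is_derive_atan 0) as Ha. apply is_derive_Reals in Ha.
    destruct (Ha eps Heps) as [del Hdel].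
    exists del. intros h Hh0 Hh.
    unfold hd, mx. rewrite Rmax_left by lra. rewrite (hfun_neg 0) by lra.
    replace (0 + h) with h by ring.
    destruct (Rle_dec h 0) as [Hn|Hp].
    + rewrite hfun_neg by lra. replace ((h - 0) / h - / (1 + 0 ^ 2)) with 0 by (simpl; field; auto).
      rewrite Rabs_R0. lra.
    + rewrite hfun_pos by lra. specialize (Hdel h Hh0 Hh).
      rewrite atan_0 in Hdel. replace (0 + h) with h in Hdel by ring.
      replace (/ (1 + 0²)) with 1 in Hdel by (unfold Rsqr; field). replace (/ (1 + 0 ^ 2)) with 1 by (simpl; field). exact Hdel.
  - apply (is_derive_ext_loc atan).
    + apply (filter_imp (fun y => 0 < y)); [intros y Hy; symmetry; apply hfun_pos; lra|].
      apply (open_gt 0 x Hx).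
    + unfold hd, mx. rewrite Rmax_right by lra.
      replace (/ (1 + x ^ 2)) with (/ (1 + x²)) by (unfold Rsqr; f_equal; ring). apply is_derive_atan.
Qed.

Lemma cplus (f g : R -> R) x : continuous f x -> continuous g x -> continuous (fun y => f y + g y) x.
Proof. intros; apply (continuous_plus f g); auto. Qed.
Lemma cmult (f g : R -> R) x : continuous f x -> continuous g x -> continuous (fun y => f y * g y) x.
Proof. intros; apply (continuous_mult f g); auto. Qed.
Lemma copp (f : R -> R) x : continuous f x -> continuous (fun y => - f y) x.
Proof. intros; apply (continuous_opp f); auto. Qed.
Lemma cminus (f g : R -> R) x : continuous f x -> continuous g x -> continuous (fun y => f y - g y) x.
Proof. intros; apply (continuous_minus f g); auto. Qed.
Lemma cinv (f : R -> R) x : continuous f x -> f x <> 0 -> continuous (fun y => / f y) x.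
Proof. intros; apply continuous_Rinv_comp; auto. Qed.
Lemma cdiv (f g : R -> R) x : continuous f x -> continuous g x -> g x <> 0 -> continuous (fun y => f y / g y) x.
Proof. intros. apply (cmult f (fun y => / g y)); auto. apply cinv; auto. Qed.
Lemma csqrt (f : R -> R) x : continuous f x -> continuous (fun y => sqrt (f y)) x.
Proof. intros; apply continuous_sqrt_comp; auto. Qed.
Lemma ccos (f : R -> R) x : continuous f x -> continuous (fun y => cos (f y)) x.
Proof. intros; apply continuous_cos_comp; auto. Qed.
Lemma csin (f : R -> R) x : continuous f x -> continuous (fun y => sin (f y)) x.
Proof.
  intros. apply (continuous_comp f sin); auto.
  apply exd_cont. exists (cos (f x)). apply is_derive_sin.
Qed.
Lemma cpow (f : R -> R) n x : continuous f x -> continuous (fun y => f y ^ n) x.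
Proof.
  intro H. induction n as [|n IH].
  - simpl. apply continuous_const.
  - simpl. apply (cmult f (fun y => f y ^ n)); auto.
Qed.
Lemma cconst (c : R) x : continuous (fun _ : R => c) x.
Proof. apply continuous_const. Qed.
Lemma cid x : continuous (fun y : R => y) x.
Proof. apply continuous_id. Qed.
Lemma ccomp (f h : R -> R) x : continuous f x -> continuous h (f x) -> continuous (fun y => h (f y)) x.
Proof. intros. apply (continuous_comp f h); auto. Qed.

Ltac cont1 := match goal with
| |- continuous (fun _ => ?c) _ => apply cconst
| |- continuous (fun y => y) _ => apply cid
| |- continuous (fun y => @?f y + @?g y) _ => apply (cplus f g)
| |- continuous (fun y => @?f y - @?g y) _ => apply (cminus f g)
| |- continuous (fun y => @?f y * @?g y) _ => apply (cmult f g)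
| |- continuous (fun y => @?f y / @?g y) _ => apply (cdiv f g)
| |- continuous (fun y => - @?f y) _ => apply (copp f)
| |- continuous (fun y => / @?f y) _ => apply (cinv f)
| |- continuous (fun y => sqrt (@?f y)) _ => apply (csqrt f)
| |- continuous (fun y => cos (@?f y)) _ => apply (ccos f)
| |- continuous (fun y => sin (@?f y)) _ => apply (csin f)
| |- continuous (fun y => @?f y ^ ?n) _ => apply (cpow f n)
end.
Ltac cont := repeat cont1.

Section Phi.
Variable R1 : R.
Hypothesis HR1 : 0 < R1 < PI/2.

Definition gam := (PI/2 - R1)/2.
Definition phi r := PI/2 + gam * hfun ((r - PI/2)/gam).
Definition phid r := hd ((r - PI/2)/gam).

Lemma gam_pos : 0 < gam.
Proof. unfold gam. lra. Qed.

Lemma phi_der r : is_derive phi r (phid r).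
Proof.
  pose proof gam_pos. unfold phi, phid.
  pose proof (hfun_der ((r - PI/2)/gam)) as H1.
  auto_derive.
  - exists (hd ((r - PI / 2) / gam)). auto.
  - change (fun x : R => hfun x) with hfun. replace ((r + - (PI / 2)) * / gam) with ((r - PI / 2) / gam) by (unfold Rdiv; ring). rewrite (is_derive_unique _ _ _ H1). field. lra.
Qed.

Lemma phid_cont r : continuous phid r.
Proof.
  pose proof gam_pos. unfold phid. apply (ccomp (fun r => (r - PI/2)/gam) hd).
  - cont. all: try (intro; lra).
  - apply hd_cont.
Qed.

Lemma phid_bnd r : 0 < phid r <= 1.
Proof. apply hd_bnd. Qed.

Lemma phi_id r : r <= PI/2 -> phi r = r.
Proof.
  intro H. pose proof gam_pos. unfold phi. rewrite hfun_neg.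
  - field. lra.
  - apply Rmult_le_reg_r with gam; auto. field_simplify; lra.
Qed.

Lemma phi_rng r : PI/2 <= r -> PI/2 <= phi r < PI - R1.
Proof.
  intro H. pose proof gam_pos. unfold phi.
  assert (Hq0 : 0 <= (r - PI/2)/gam) by (apply Rmult_le_pos; [lra|apply Rlt_le, Rinv_0_lt_compat; lra]).
  rewrite hfun_pos by auto.
  pose proof (atan_bound ((r - PI / 2) / gam)).
  assert (0 <= atan ((r - PI / 2) / gam)).
  { rewrite <- atan_0. destruct (Req_dec ((r - PI / 2) / gam) 0) as [E|E]; [rewrite E; lra|].
    apply Rlt_le, atan_increasing; lra. }
  split; [nra|]. unfold gam in *. pose proof PI_RGT_0. pose proof PI_4. nra.
Qed.

Definition Co q := cos (phi (sqrt q)).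
Definition Ko q := sin (phi (sqrt q)) / sqrt q.
Definition Co' q := - sin (phi (sqrt q)) * phid (sqrt q) / (2 * sqrt q).
Definition Ko' q := (sqrt q * cos (phi (sqrt q)) * phid (sqrt q) - sin (phi (sqrt q))) / (2 * q * sqrt q).

Lemma Co_der q : 0 < q -> is_derive Co q (Co' q).
Proof.
  intro Hq. unfold Co, Co'. pose proof (sqrt_lt_R0 q Hq).
  pose proof (phi_der (sqrt q)) as H1.
  auto_derive.
  - split; [exists (phid (sqrt q)); auto|]. split; [auto|auto].
  - change (fun x : R => phi x) with phi. rewrite (is_derive_unique _ _ _ H1). field. lra.
Qed.

Lemma Ko_der q : 0 < q -> is_derive Ko q (Ko' q).
Proof.
  intro Hq. unfold Ko, Ko'. pose proof (sqrt_lt_R0 q Hq).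
  pose proof (phi_der (sqrt q)) as H1.
  assert (Hs : sqrt q * sqrt q = q) by (apply sqrt_sqrt; lra).
  auto_derive.
  - repeat split; try (exists (phid (sqrt q)); auto); auto; lra.
  - change (fun x : R => phi x) with phi. rewrite (is_derive_unique _ _ _ H1).
    replace (2 * q * sqrt q) with (2 * (sqrt q * sqrt q) * sqrt q) by (rewrite Hs; ring). field. lra.
Qed.

Lemma phi_cont r : continuous phi r.
Proof. apply exd_cont. exists (phid r). apply phi_der. Qed.

Lemma csqrt_phi q : continuous (fun y => phi (sqrt y)) q.
Proof. apply (ccomp sqrt phi). apply continuous_sqrt. apply phi_cont. Qed.
Lemma csqrt_phid q : continuous (fun y => phid (sqrt y)) q.
Proof. apply (ccomp sqrt phid). apply continuous_sqrt. apply phid_cont. Qed.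

Lemma Co'_cont q : 0 < q -> continuous Co' q.
Proof.
  intro Hq. pose proof (sqrt_lt_R0 q Hq). unfold Co'.
  cont; try apply csqrt_phi; try apply csqrt_phid; try apply continuous_sqrt; lra.
Qed.

Lemma Ko'_cont q : 0 < q -> continuous Ko' q.
Proof.
  intro Hq. pose proof (sqrt_lt_R0 q Hq). unfold Ko'.
  cont; try apply csqrt_phi; try apply csqrt_phid; try apply continuous_sqrt.
  apply Rgt_not_eq. apply Rmult_lt_0_compat; [|auto]. lra.
Qed.

Lemma PI_gt1 : 1 < PI/2.
Proof. pose proof PI_RGT_0. pose proof PI2_1. lra. Qed.

Lemma Ci_Co q : 0 < q < 1 -> Ci q = Co q.
Proof.
  intro Hq. unfold Co. pose proof (sqrt_lt_R0 q ltac:(lra)).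
  assert (sqrt q < 1) by (rewrite <- sqrt_1; apply sqrt_lt_1_alt; lra).
  pose proof PI_gt1.
  rewrite phi_id by lra. rewrite <- (Ci_cos (sqrt q)). rewrite pow2_sqrt by lra. auto.
Qed.

Lemma Ki_Ko q : 0 < q < 1 -> Ki q = Ko q.
Proof.
  intro Hq. unfold Ko. pose proof (sqrt_lt_R0 q ltac:(lra)).
  assert (sqrt q < 1) by (rewrite <- sqrt_1; apply sqrt_lt_1_alt; lra).
  pose proof PI_gt1.
  rewrite phi_id by lra. rewrite <- (Ki_sin (sqrt q)). rewrite pow2_sqrt by lra. field. lra.
Qed.

Lemma loc_01 q : 0 < q < 1 -> locally q (fun y => 0 < y < 1).
Proof.
  intro Hq. apply filter_and; [apply (open_gt 0 q); lra|apply (open_lt 1 q); lra].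
Qed.

Lemma Ci'_Co' q : 0 < q < 1 -> Ci' q = Co' q.
Proof.
  intro Hq. assert (H : is_derive Ci q (Co' q)).
  { apply (is_derive_ext_loc Co); [|apply Co_der; lra].
    apply (filter_imp (fun y => 0 < y < 1)); [intros y Hy; symmetry; apply Ci_Co; auto|].
    apply loc_01; auto. }
  rewrite <- (is_derive_unique _ _ _ H). symmetry. apply is_derive_unique. apply Ci_der.
Qed.

Lemma Ki'_Ko' q : 0 < q < 1 -> Ki' q = Ko' q.
Proof.
  intro Hq. assert (H : is_derive Ki q (Ko' q)).
  { apply (is_derive_ext_loc Ko); [|apply Ko_der; lra].
    apply (filter_imp (fun y => 0 < y < 1)); [intros y Hy; symmetry; apply Ki_Ko; auto|].
    apply loc_01; auto. }
  rewrite <- (is_derive_unique _ _ _ H). symmetry. apply is_derive_unique. apply Ki_der.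
Qed.

Definition Cg q := if Rlt_dec q 1 then Ci q else Co q.
Definition Kg q := if Rlt_dec q 1 then Ki q else Ko q.
Definition Cgd q := if Rlt_dec q 1 then Ci' q else Co' q.
Definition Kgd q := if Rlt_dec q 1 then Ki' q else Ko' q.

Lemma Cg_pos q : 0 < q -> Cg q = Co q /\ Cgd q = Co' q.
Proof.
  intro Hq. unfold Cg, Cgd. destruct (Rlt_dec q 1).
  - split; [apply Ci_Co|apply Ci'_Co']; lra.
  - auto.
Qed.
Lemma Kg_pos q : 0 < q -> Kg q = Ko q /\ Kgd q = Ko' q.
Proof.
  intro Hq. unfold Kg, Kgd. destruct (Rlt_dec q 1).
  - split; [apply Ki_Ko|apply Ki'_Ko']; lra.
  - auto.
Qed.
Lemma Cg_0 : Cg 0 = 1.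
Proof. unfold Cg. destruct (Rlt_dec 0 1); [apply Ci_0|lra]. Qed.
Lemma Kg_0 : Kg 0 = 1.
Proof. unfold Kg. destruct (Rlt_dec 0 1); [apply Ki_0|lra]. Qed.

Lemma Cg_der q : is_derive Cg q (Cgd q).
Proof.
  destruct (Rlt_dec q 1) as [H|H].
  - apply (is_derive_ext_loc Ci).
    + apply (filter_imp (fun y => y < 1)); [|apply (open_lt 1 q H)].
      intros y Hy. unfold Cg. destruct (Rlt_dec y 1); [auto|lra].
    + unfold Cgd. destruct (Rlt_dec q 1); [apply Ci_der|lra].
  - apply (is_derive_ext_loc Co).
    + apply (filter_imp (fun y => 1/2 < y)); [|apply (open_gt (1/2) q); lra].
      intros y Hy. symmetry. apply Cg_pos. lra.
    + destruct (Cg_pos q ltac:(lra)) as [_ ->]. apply Co_der. lra.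
Qed.
Lemma Kg_der q : is_derive Kg q (Kgd q).
Proof.
  destruct (Rlt_dec q 1) as [H|H].
  - apply (is_derive_ext_loc Ki).
    + apply (filter_imp (fun y => y < 1)); [|apply (open_lt 1 q H)].
      intros y Hy. unfold Kg. destruct (Rlt_dec y 1); [auto|lra].
    + unfold Kgd. destruct (Rlt_dec q 1); [apply Ki_der|lra].
  - apply (is_derive_ext_loc Ko).
    + apply (filter_imp (fun y => 1/2 < y)); [|apply (open_gt (1/2) q); lra].
      intros y Hy. symmetry. apply Kg_pos. lra.
    + destruct (Kg_pos q ltac:(lra)) as [_ ->]. apply Ko_der. lra.
Qed.
Lemma Cgd_cont q : continuous Cgd q.
Proof.
  destruct (Rlt_dec q 1) as [H|H].
  - apply (continuous_ext_loc _ Ci'); [|apply Ci'_cont].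
    apply (filter_imp (fun y => y < 1)); [|apply (open_lt 1 q H)].
    intros y Hy. unfold Cgd. destruct (Rlt_dec y 1); [auto|lra].
  - apply (continuous_ext_loc _ Co'); [|apply Co'_cont; lra].
    apply (filter_imp (fun y => 1/2 < y)); [|apply (open_gt (1/2) q); lra].
    intros y Hy. symmetry. apply Cg_pos. lra.
Qed.
Lemma Kgd_cont q : continuous Kgd q.
Proof.
  destruct (Rlt_dec q 1) as [H|H].
  - apply (continuous_ext_loc _ Ki'); [|apply Ki'_cont].
    apply (filter_imp (fun y => y < 1)); [|apply (open_lt 1 q H)].
    intros y Hy. unfold Kgd. destruct (Rlt_dec y 1); [auto|lra].
  - apply (continuous_ext_loc _ Ko'); [|apply Ko'_cont; lra].
    apply (filter_imp (fun y => 1/2 < y)); [|apply (open_gt (1/2) q); lra].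
    intros y Hy. symmetry. apply Kg_pos. lra.
Qed.

Lemma sin_phi_sq r : 0 < r -> sin (phi r) ^ 2 <= r ^ 2.
Proof.
  intro Hr. destruct (Rle_dec r (PI/2)) as [H|H].
  - rewrite phi_id by auto. pose proof (sin_lt_x r Hr). pose proof (sin_ge_0 r ltac:(lra) ltac:(lra)). nra.
  - pose proof (SIN_bound (phi r)). pose proof PI_gt1. nra.
Qed.

Lemma CK_unit q : 0 <= q -> Cg q ^ 2 + q * Kg q ^ 2 = 1.
Proof.
  intro Hq. destruct (Req_dec q 0) as [->|Hq0].
  - rewrite Cg_0. ring.
  - destruct (Cg_pos q ltac:(lra)) as [-> _]. destruct (Kg_pos q ltac:(lra)) as [-> _].
    unfold Co, Ko. pose proof (sqrt_lt_R0 q ltac:(lra)).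
    pose proof (sin2_cos2 (phi (sqrt q))). unfold Rsqr in *.
    assert (Hs : sqrt q * sqrt q = q) by (apply sqrt_sqrt; lra).
    set (r := sqrt q) in *. rewrite <- Hs. field_simplify; lra.
Qed.

Lemma CK_orth q : 0 < q -> Cg q * Cgd q + q * Kg q * Kgd q + Kg q ^ 2 / 2 = 0.
Proof.
  intro Hq. destruct (Cg_pos q Hq) as [-> ->]. destruct (Kg_pos q Hq) as [-> ->].
  unfold Co, Ko, Co', Ko'. pose proof (sqrt_lt_R0 q Hq).
  assert (Hs : sqrt q * sqrt q = q) by (apply sqrt_sqrt; lra).
  set (r := sqrt q) in *. rewrite <- Hs. field. lra.
Qed.

Lemma CK_norm q w1 w2 v1 v2 : q = w1^2 + w2^2 -> 0 < q ->
  let qd := 2 * (w1 * v1 + w2 * v2) in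
  (Kgd q * qd * w1 + Kg q * v1)^2 + (Kgd q * qd * w2 + Kg q * v2)^2 + (Cgd q * qd)^2 <= v1^2 + v2^2.
Proof.
  intros Hq Hq0 qd.
  assert (E1 : (Kgd q * qd * w1 + Kg q * v1)^2 + (Kgd q * qd * w2 + Kg q * v2)^2 + (Cgd q * qd)^2
     = Kg q ^2 * (v1^2+v2^2) + qd^2 * (Cgd q^2 + Kg q * Kgd q + q * Kgd q^2)).
  { unfold qd. rewrite Hq. ring. }
  rewrite E1. clear E1.
  assert (CS : qd^2 <= 4 * q * (v1^2 + v2^2)).
  { unfold qd. rewrite Hq. pose proof (pow2_ge_0 (w1*v2 - w2*v1)). nra. }
  destruct (Cg_pos q Hq0) as [_ ->]. destruct (Kg_pos q Hq0) as [-> ->].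
  unfold Co, Ko, Co', Ko'.
  pose proof (sqrt_lt_R0 q Hq0) as Hr.
  assert (Hs : sqrt q * sqrt q = q) by (apply sqrt_sqrt; lra).
  pose proof (sin2_cos2 (phi (sqrt q))) as Hsc. unfold Rsqr in Hsc.
  pose proof (phid_bnd (sqrt q)) as Hpd.
  pose proof (sin_phi_sq (sqrt q) Hr) as Hsq.
  set (s := sin (phi (sqrt q))) in *. set (c := cos (phi (sqrt q))) in *.
  set (pd := phid (sqrt q)) in *. set (r := sqrt q) in *. clearbody s c pd r. subst q.
  assert (E2 : (s / r)^2 = s^2 / (r*r)^2 * (r*r)) by (field; lra).
  assert (E3 : (- s * pd / (2 * r))^2 + s / r * ((r * c * pd - s) / (2 * (r*r) * r))
       + r*r * ((r * c * pd - s) / (2 * (r*r) * r))^2 = ((r*r) * pd^2 - s^2) / (4 * (r*r)^2)).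
  { field_simplify; try lra. replace (c^2) with (1 - s^2) by lra. field. lra. }
  rewrite <- Hs in CS |- *. rewrite E3.
  set (X := v1^2 + v2^2) in *. set (Y := qd^2) in *.
  assert (HY : 0 <= Y) by (unfold Y; apply pow2_ge_0).
  clearbody X Y.
  assert (Hq2 : 0 < r*r) by nra.
  assert (B : (s/r)^2 * X + Y * ((r*r) * pd^2 - s^2) / (4 * (r*r)^2) <= (s/r)^2 * X + Y * ((r*r) - s^2) / (4 * (r*r)^2)).
  { apply Rplus_le_compat_l. unfold Rdiv. apply Rmult_le_compat_r.
    - apply Rlt_le, Rinv_0_lt_compat. nra.
    - apply Rmult_le_compat_l; auto. assert (pd^2 <= 1) by nra. nra. }
  replace (Y * ((r * r * pd ^ 2 - s ^ 2) / (4 * (r * r) ^ 2))) with (Y * (r*r*pd^2 - s^2) / (4*(r*r)^2)) by (field; lra).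
  eapply Rle_trans; [exact B|].
  assert (B2 : Y * ((r*r) - s^2) / (4 * (r*r)^2) <= 4 * (r*r) * X * ((r*r) - s^2) / (4 * (r*r)^2)).
  { unfold Rdiv. apply Rmult_le_compat_r; [apply Rlt_le, Rinv_0_lt_compat; nra|].
    apply Rmult_le_compat_r; [nra|]. auto. }
  assert (E4 : (s/r)^2 * X + 4 * (r*r) * X * ((r*r) - s^2) / (4 * (r*r)^2) = X) by (field; lra).
  lra.
Qed.

Lemma Cg_cos q d : 0 <= q -> 0 <= d -> d <= sqrt q -> d <= R1 -> Cg q ^ 2 <= cos d ^ 2.
Proof.
  intros Hq Hd H1 H2. pose proof PI_RGT_0.
  destruct (Req_dec q 0) as [->|Hq0].
  - rewrite sqrt_0 in H1. assert (d = 0) by lra. subst. rewrite Cg_0, cos_0. lra.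
  - destruct (Cg_pos q ltac:(lra)) as [-> _]. unfold Co.
    pose proof (sqrt_lt_R0 q ltac:(lra)) as Hr.
    destruct (Rle_dec (sqrt q) (PI/2)) as [Hs|Hs].
    + rewrite phi_id by auto.
      assert (cos (sqrt q) <= cos d).
      { destruct (Req_dec d (sqrt q)) as [->|Hne]; [lra|].
        apply Rlt_le, cos_decreasing_1; lra. }
      pose proof (cos_ge_0 (sqrt q) ltac:(lra) ltac:(lra)). nra.
    + pose proof (phi_rng (sqrt q) ltac:(lra)) as [P1 P2].
      assert (C1' : cos (phi (sqrt q)) <= 0).
      { rewrite <- cos_PI2. destruct (Req_dec (phi (sqrt q)) (PI/2)) as [->|Hne]; [lra|].
        apply Rlt_le, cos_decreasing_1; lra. }
      assert (C2 : cos (PI - R1) < cos (phi (sqrt q))) by (apply cos_decreasing_1; lra).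
      rewrite Rtrigo_facts.cos_pi_minus in C2.
      assert (C3 : cos R1 <= cos d).
      { destruct (Req_dec d R1) as [->|Hne]; [lra|]. apply Rlt_le, cos_decreasing_1; lra. }
      pose proof (cos_ge_0 R1 ltac:(lra) ltac:(lra)). nra.
Qed.
End Phi.


Lemma CS4 a1 a2 a3 a4 b1 b2 b3 b4 :
  (a1*b1 + a2*b2 + a3*b3 + a4*b4)^2 <= (a1^2+a2^2+a3^2+a4^2) * (b1^2+b2^2+b3^2+b4^2).
Proof.
  assert (E : (a1^2+a2^2+a3^2+a4^2) * (b1^2+b2^2+b3^2+b4^2) - (a1*b1 + a2*b2 + a3*b3 + a4*b4)^2 =
    (a1*b2-a2*b1)^2 + (a1*b3-a3*b1)^2 + (a1*b4-a4*b1)^2 + (a2*b3-a3*b2)^2 + (a2*b4-a4*b2)^2 + (a3*b4-a4*b3)^2) by ring.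
  pose proof (pow2_ge_0 (a1*b2-a2*b1)). pose proof (pow2_ge_0 (a1*b3-a3*b1)).
  pose proof (pow2_ge_0 (a1*b4-a4*b1)). pose proof (pow2_ge_0 (a2*b3-a3*b2)).
  pose proof (pow2_ge_0 (a2*b4-a4*b2)). pose proof (pow2_ge_0 (a3*b4-a4*b3)). lra.
Qed.

Lemma HdCS (A1 A2 A3 A4 P1 P2 P3 P4 D1 D2 D3 D4 : R) :
  A1^2+A2^2+A3^2+A4^2 = 1 -> P1^2+P2^2+P3^2+P4^2 = 1 -> P1*D1+P2*D2+P3*D3+P4*D4 = 0 ->
  let h := A1*P1+A2*P2+A3*P3+A4*P4 in
  (A1*D1+A2*D2+A3*D3+A4*D4)^2 <= (D1^2+D2^2+D3^2+D4^2) * (1 - h^2).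
Proof.
  intros HA HP HPD h.
  pose proof (CS4 D1 D2 D3 D4 (A1 - h*P1) (A2 - h*P2) (A3 - h*P3) (A4 - h*P4)) as C.
  assert (E1 : D1 * (A1 - h * P1) + D2 * (A2 - h * P2) + D3 * (A3 - h * P3) + D4 * (A4 - h * P4)
    = A1*D1+A2*D2+A3*D3+A4*D4 - h * (P1*D1+P2*D2+P3*D3+P4*D4)) by ring.
  assert (E2 : (A1 - h * P1)^2 + (A2 - h * P2)^2 + (A3 - h * P3)^2 + (A4 - h * P4)^2
    = (A1^2+A2^2+A3^2+A4^2) - 2*h*h + h^2 * (P1^2+P2^2+P3^2+P4^2)) by (unfold h; ring).
  rewrite E1, HPD, E2, HA, HP in C. replace (1 - 2*h*h + h^2*1) with (1 - h^2) in C by ring.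
  replace (A1 * D1 + A2 * D2 + A3 * D3 + A4 * D4 - h * 0) with (A1*D1+A2*D2+A3*D3+A4*D4) in C by ring.
  exact C.
Qed.

Lemma isd_acos x : -1 < x < 1 -> is_derive acos x (- / sqrt (1 - x^2)).
Proof.
  intro H. apply is_derive_Reals.
  apply (derive_pt_eq_1 _ _ _ (derivable_pt_acos x H)).
  rewrite derive_pt_acos. unfold Rsqr. replace (x*x) with (x^2) by ring.
  field. apply Rgt_not_eq. apply sqrt_lt_R0. nra.
Qed.

Section Pot.
Variable R1 : R.
Hypothesis HR1 : 0 < R1 < PI/2.
Variables (d1 d2 A1 A2 A3 A4 e : R).
Hypothesis HA : A1^2+A2^2+A3^2+A4^2 = 1.
Hypothesis He : 0 < e < 1.

Definition qq (x y : R) := (x - d1)^2 + (y - d2)^2.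
Definition Hp (x y z : R) :=
  A1 * (Cg R1 (qq x y) * cos z) + A2 * (Cg R1 (qq x y) * sin z)
  + A3 * (Kg R1 (qq x y) * (x - d1)) + A4 * (Kg R1 (qq x y) * (y - d2)).
Definition Vp (x y z : R) := acos (e * Hp x y z).

Lemma Cg_cont q : continuous (Cg R1) q.
Proof. apply exd_cont. exists (Cgd R1 q). apply Cg_der; auto. Qed.
Lemma Kg_cont q : continuous (Kg R1) q.
Proof. apply exd_cont. exists (Kgd R1 q). apply Kg_der; auto. Qed.

Lemma Hp_bnd x y z : Hp x y z ^ 2 <= 1.
Proof.
  unfold Hp.
  pose proof (CS4 A1 A2 A3 A4 (Cg R1 (qq x y) * cos z) (Cg R1 (qq x y) * sin z)
     (Kg R1 (qq x y) * (x - d1)) (Kg R1 (qq x y) * (y - d2))) as C.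
  rewrite HA in C.
  assert (E : (Cg R1 (qq x y) * cos z) ^ 2 + (Cg R1 (qq x y) * sin z) ^ 2 +
      (Kg R1 (qq x y) * (x - d1)) ^ 2 + (Kg R1 (qq x y) * (y - d2)) ^ 2 = 1).
  { rewrite <- (CK_unit R1 HR1 (qq x y)) by (unfold qq; pose proof (pow2_ge_0 (x-d1)); pose proof (pow2_ge_0 (y-d2)); lra).
    pose proof (sin2_cos2 z). unfold Rsqr in *. unfold qq.
    replace ((Cg R1 ((x - d1) ^ 2 + (y - d2) ^ 2) * cos z) ^ 2 + (Cg R1 ((x - d1) ^ 2 + (y - d2) ^ 2) * sin z) ^ 2)
      with (Cg R1 ((x - d1) ^ 2 + (y - d2) ^ 2) ^ 2 * (sin z * sin z + cos z * cos z)) by ring.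
    rewrite H. ring. }
  rewrite E in C. lra.
Qed.

Lemma DCg q : Derive (fun x => Cg R1 x) q = Cgd R1 q.
Proof. apply is_derive_unique. apply Cg_der; auto. Qed.
Lemma DKg q : Derive (fun x => Kg R1 x) q = Kgd R1 q.
Proof. apply is_derive_unique. apply Kg_der; auto. Qed.

Local Opaque Cg Kg Cgd Kgd.

Variable a : R.
Hypothesis Hdel : in_Delta a (d1,d2).
Hypothesis Hcov : forall x y, dist_Delta a x y <= R1.

Section Piece.
Variables (fx fy fz : R -> R).
Hypotheses (Cx : Defs.C1 fx) (Cy : Defs.C1 fy) (Cz : Defs.C1 fz).

Definition Ht t := Hp (fx t) (fy t) (fz t).
Definition qt t := qq (fx t) (fy t).
Definition qdt t := 2 * ((fx t - d1) * Derive fx t + (fy t - d2) * Derive fy t).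
Definition P1d t := Cgd R1 (qt t) * qdt t * cos (fz t) - Cg R1 (qt t) * sin (fz t) * Derive fz t.
Definition P2d t := Cgd R1 (qt t) * qdt t * sin (fz t) + Cg R1 (qt t) * cos (fz t) * Derive fz t.
Definition P3d t := Kgd R1 (qt t) * qdt t * (fx t - d1) + Kg R1 (qt t) * Derive fx t.
Definition P4d t := Kgd R1 (qt t) * qdt t * (fy t - d2) + Kg R1 (qt t) * Derive fy t.
Definition Hdt t := A1 * P1d t + A2 * P2d t + A3 * P3d t + A4 * P4d t.

Lemma Ht_der t : is_derive Ht t (Hdt t).
Proof.
  destruct Cx as [Dx _]. destruct Cy as [Dy _]. destruct Cz as [Dz _].
  unfold Ht, Hp, Hdt, P1d, P2d, P3d, P4d, qdt, qt, qq.
  auto_derive.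
  - repeat split; match goal with
     | |- ex_derive (fun x => Cg _ x) ?q => exists (Cgd R1 q); apply Cg_der; exact HR1
     | |- ex_derive (fun x => Kg _ x) ?q => exists (Kgd R1 q); apply Kg_der; exact HR1
     | |- ex_derive (fun x => fx x) _ => exact (Dx t)
     | |- ex_derive (fun x => fy x) _ => exact (Dy t)
     | |- ex_derive (fun x => fz x) _ => exact (Dz t)
     end.
  - replace ((fx t + - d1) * ((fx t + - d1) * 1) + (fy t + - d2) * ((fy t + - d2) * 1))
      with ((fx t - d1)^2 + (fy t - d2)^2) by ring.
    rewrite !DCg, !DKg.
    change (fun x : R => fx x) with fx. change (fun x : R => fy x) with fy. change (fun x : R => fz x) with fz.
    ring.
Qed.
Lemma fcont (f : R -> R) : Defs.C1 f -> (forall t, continuous f t) /\ (forall t, continuous (Derive f) t).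
Proof. intros [H1 H2]. split; auto. intro t. apply exd_cont. auto. Qed.

Lemma Hdt_cont t : continuous Hdt t.
Proof.
  destruct (fcont fx Cx) as [Fx Gx]. destruct (fcont fy Cy) as [Fy Gy]. destruct (fcont fz Cz) as [Fz Gz].
  unfold Hdt, P1d, P2d, P3d, P4d, qdt, qt, qq.
  repeat first [ cont1
    | match goal with
      | |- continuous (fun y => Cg R1 (@?f y)) _ => apply (ccomp f (Cg R1)); [|apply Cg_cont]
      | |- continuous (fun y => Kg R1 (@?f y)) _ => apply (ccomp f (Kg R1)); [|apply Kg_cont]
      | |- continuous (fun y => Cgd R1 (@?f y)) _ => apply (ccomp f (Cgd R1)); [|apply Cgd_cont; exact HR1]
      | |- continuous (fun y => Kgd R1 (@?f y)) _ => apply (ccomp f (Kgd R1)); [|apply Kgd_cont; exact HR1]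
      | |- continuous (fun y => Derive fx y) _ => exact (Gx _)
      | |- continuous (fun y => Derive fy y) _ => exact (Gy _)
      | |- continuous (fun y => Derive fz y) _ => exact (Gz _)
      | |- continuous (fun y => fx y) _ => exact (Fx _)
      | |- continuous (fun y => fy y) _ => exact (Fy _)
      | |- continuous (fun y => fz y) _ => exact (Fz _)
      end ].
Qed.

Lemma Ht_cont t : continuous Ht t.
Proof. apply exd_cont. exists (Hdt t). apply Ht_der. Qed.

Definition spd t := h_speed a (fx t, fy t, fz t) (Derive fx t, Derive fy t, Derive fz t).

Lemma qt_nonneg t : 0 <= qt t.
Proof. unfold qt, qq. pose proof (pow2_ge_0 (fx t - d1)). pose proof (pow2_ge_0 (fy t - d2)). lra. Qed.

Lemma P_unit t : (Cg R1 (qt t) * cos (fz t))^2 + (Cg R1 (qt t) * sin (fz t))^2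
   + (Kg R1 (qt t) * (fx t - d1))^2 + (Kg R1 (qt t) * (fy t - d2))^2 = 1.
Proof.
  rewrite <- (CK_unit R1 HR1 (qt t) (qt_nonneg t)).
  pose proof (sin2_cos2 (fz t)) as H. unfold Rsqr in H.
  transitivity (Cg R1 (qt t) ^2 * (sin (fz t) * sin (fz t) + cos (fz t) * cos (fz t))
      + Kg R1 (qt t)^2 * ((fx t - d1)^2 + (fy t - d2)^2)); [ring|].
  rewrite H. unfold qt, qq. ring.
Qed.

Lemma PPd_orth t : (Cg R1 (qt t) * cos (fz t)) * P1d t + (Cg R1 (qt t) * sin (fz t)) * P2d t
   + (Kg R1 (qt t) * (fx t - d1)) * P3d t + (Kg R1 (qt t) * (fy t - d2)) * P4d t = 0.
Proof.
  unfold P1d, P2d, P3d, P4d.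
  pose proof (sin2_cos2 (fz t)) as H. unfold Rsqr in H.
  transitivity (qdt t * (Cg R1 (qt t) * Cgd R1 (qt t) * (sin (fz t) * sin (fz t) + cos (fz t) * cos (fz t))
     + qt t * Kg R1 (qt t) * Kgd R1 (qt t) + Kg R1 (qt t) ^2 / 2)).
  { unfold qdt, qt, qq. field. }
  rewrite H. destruct (Req_dec (qt t) 0) as [E|E].
  - assert (W : fx t - d1 = 0 /\ fy t - d2 = 0).
    { unfold qt, qq in E. pose proof (pow2_ge_0 (fx t - d1)). pose proof (pow2_ge_0 (fy t - d2)).
      assert (A1' : (fx t - d1)^2 = 0) by lra. assert (A2' : (fy t - d2)^2 = 0) by lra.
      rewrite <- Rsqr_pow2 in A1', A2'. apply Rsqr_0_uniq in A1'. apply Rsqr_0_uniq in A2'. auto. }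
    unfold qdt. destruct W as [-> ->]. ring.
  - rewrite Rmult_1_r. rewrite (CK_orth R1 HR1 (qt t)); [ring|]. pose proof (qt_nonneg t). lra.
Qed.

Lemma Pd_norm t : P1d t ^2 + P2d t ^2 + P3d t ^2 + P4d t ^2 <=
   Derive fx t ^ 2 + Derive fy t ^ 2 + cos (dist_Delta a (fx t) (fy t)) ^ 2 * Derive fz t ^ 2.
Proof.
  pose proof (sin2_cos2 (fz t)) as H. unfold Rsqr in H.
  assert (E : P1d t ^2 + P2d t ^2 = (Cgd R1 (qt t) * qdt t)^2 + Cg R1 (qt t)^2 * Derive fz t ^2).
  { unfold P1d, P2d.
    transitivity (((Cgd R1 (qt t) * qdt t)^2 + Cg R1 (qt t)^2 * Derive fz t ^2) * (sin (fz t) * sin (fz t) + cos (fz t) * cos (fz t))); [ring|].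
    rewrite H. ring. }
  assert (Hc : Cg R1 (qt t)^2 <= cos (dist_Delta a (fx t) (fy t)) ^ 2).
  { apply (Cg_cos R1 HR1); [apply qt_nonneg|apply dist_Delta_ge0| |apply Hcov].
    eapply Rle_trans; [apply (dist_Delta_le a _ _ (d1,d2) Hdel)|]. unfold dist2, qt, qq. cbn [fst snd]. lra. }
  assert (Hz : Cg R1 (qt t)^2 * Derive fz t ^2 <= cos (dist_Delta a (fx t) (fy t)) ^ 2 * Derive fz t ^2).
  { apply Rmult_le_compat_r; auto. apply pow2_ge_0. }
  destruct (Req_dec (qt t) 0) as [Eq|Eq].
  - assert (W : fx t - d1 = 0 /\ fy t - d2 = 0).
    { unfold qt, qq in Eq. pose proof (pow2_ge_0 (fx t - d1)). pose proof (pow2_ge_0 (fy t - d2)).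
      assert (A1' : (fx t - d1)^2 = 0) by lra. assert (A2' : (fy t - d2)^2 = 0) by lra.
      rewrite <- Rsqr_pow2 in A1', A2'. apply Rsqr_0_uniq in A1'. apply Rsqr_0_uniq in A2'. auto. }
    assert (Q0 : qdt t = 0) by (unfold qdt; destruct W as [-> ->]; ring).
    unfold P3d, P4d. rewrite Q0, Eq, (Kg_0 R1). rewrite Eq, Q0 in E. rewrite E.
    destruct W as [W1 W2]. rewrite W1, W2. rewrite Eq in Hz. lra.
  - pose proof (CK_norm R1 HR1 (qt t) (fx t - d1) (fy t - d2) (Derive fx t) (Derive fy t) eq_refl
        ltac:(pose proof (qt_nonneg t); lra)) as N.
    cbv zeta in N. fold (qdt t) in N. unfold P3d, P4d. lra.
Qed.

Definition Psi t := acos (e * Ht t).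
Definition Psid t := e * Hdt t * (- / sqrt (1 - (e * Ht t)^2)).

Lemma Ht_bnd t : Ht t ^ 2 <= 1.
Proof. apply Hp_bnd. Qed.

Lemma eH_lt t : -1 < e * Ht t < 1.
Proof. pose proof (Ht_bnd t). assert ((e * Ht t)^2 < 1) by nra. split; nra. Qed.

Lemma Psi_der t : is_derive Psi t (Psid t).
Proof.
  unfold Psi, Psid.
  pose proof (isd_acos (e * Ht t) (eH_lt t)) as H1.
  assert (H2 : is_derive (fun t => e * Ht t) t (e * Hdt t)).
  { pose proof (Ht_der t) as H. auto_derive. exists (Hdt t). exact H.
    change (fun x : R => Ht x) with Ht. rewrite (is_derive_unique _ _ _ H). ring. }
  pose proof (is_derive_comp acos (fun t => e * Ht t) t _ _ H1 H2) as HC.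
  rewrite scal_R in HC. exact HC.
Qed.

Lemma Psid_cont t : continuous Psid t.
Proof.
  unfold Psid.
  pose proof (eH_lt t).
  apply (cmult (fun t => e * Hdt t)).
  - apply (cmult (fun _ => e) Hdt); [apply cconst|apply Hdt_cont].
  - apply copp. apply cinv.
    + apply csqrt. apply cminus; [apply cconst|]. apply cpow. apply (cmult (fun _ => e) Ht); [apply cconst|apply Ht_cont].
    + apply Rgt_not_eq, sqrt_lt_R0. nra.
Qed.

Lemma Psid_le t : Psid t <= spd t.
Proof.
  unfold spd, h_speed, px, py, pz. cbn [fst snd].
  set (S := Derive fx t ^ 2 + Derive fy t ^ 2 + cos (dist_Delta a (fx t) (fy t)) ^ 2 * Derive fz t ^ 2).
  assert (HN : P1d t ^2 + P2d t ^2 + P3d t ^2 + P4d t ^2 <= S) by apply Pd_norm.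
  pose proof (HdCS A1 A2 A3 A4 _ _ _ _ (P1d t) (P2d t) (P3d t) (P4d t) HA (P_unit t) (PPd_orth t)) as CS.
  cbv zeta in CS. fold (Hdt t) in CS.
  assert (Hh : A1 * (Cg R1 (qt t) * cos (fz t)) + A2 * (Cg R1 (qt t) * sin (fz t)) +
      A3 * (Kg R1 (qt t) * (fx t - d1)) + A4 * (Kg R1 (qt t) * (fy t - d2)) = Ht t) by reflexivity.
  rewrite Hh in CS.
  pose proof (Ht_bnd t) as Hb.
  set (h := Ht t) in *. set (hd := Hdt t) in *.
  set (N := P1d t ^2 + P2d t ^2 + P3d t ^2 + P4d t ^2) in *.
  assert (HQ : 0 < 1 - (e*h)^2) by nra.
  assert (HD : sqrt (1 - (e*h)^2) ^ 2 = 1 - (e*h)^2) by (rewrite <- Rsqr_pow2; apply Rsqr_sqrt; lra).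
  assert (HD0 : 0 < sqrt (1 - (e*h)^2)) by (apply sqrt_lt_R0; lra).
  assert (Sq : Psid t ^ 2 <= S).
  { unfold Psid. fold h hd.
    replace ((e * hd * - / sqrt (1 - (e * h) ^ 2)) ^ 2) with (e^2 * hd^2 / (sqrt (1 - (e*h)^2))^2) by (field; lra).
    rewrite HD.
    apply Rle_trans with (e^2 * (N * (1 - h^2)) / (1 - (e*h)^2)).
    - unfold Rdiv. apply Rmult_le_compat_r; [apply Rlt_le, Rinv_0_lt_compat; lra|].
      apply Rmult_le_compat_l; [nra|auto].
    - apply Rle_trans with N; [|auto].
      assert (HN0 : 0 <= N) by (unfold N; pose proof (pow2_ge_0 (P1d t)); pose proof (pow2_ge_0 (P2d t));
          pose proof (pow2_ge_0 (P3d t)); pose proof (pow2_ge_0 (P4d t)); lra).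
      apply (Rmult_le_reg_r (1 - (e*h)^2)); auto.
      unfold Rdiv. rewrite Rmult_assoc, Rinv_l by lra. rewrite Rmult_1_r.
      assert (e^2 * (1 - h^2) <= 1 - (e*h)^2) by nra. nra. }
  destruct (Rle_dec (Psid t) 0) as [Hn|Hp].
  - pose proof (sqrt_pos S). lra.
  - rewrite <- (sqrt_pow2 (Psid t)) by lra. apply sqrt_le_1_alt. auto.
Qed.

Lemma piece (ta tb l : R) : ta <= tb -> is_RInt spd ta tb l -> Psi tb - Psi ta <= l.
Proof.
  intros Hab HI.
  assert (HD : is_RInt Psid ta tb (minus (Psi tb) (Psi ta))).
  { apply (@is_RInt_derive R_CompleteNormedModule Psi Psid ta tb); intros; [apply Psi_der|apply Psid_cont]. }
  change (minus (Psi tb) (Psi ta)) with (Psi tb - Psi ta) in HD.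
  apply (is_RInt_le Psid spd ta tb); auto. intros t _. apply Psid_le.
Qed.

End Piece.
End Pot.


Lemma trig_Zper x k : cos (x + 2*PI*IZR k) = cos x /\ sin (x + 2*PI*IZR k) = sin x.
Proof.
  destruct (Z_le_gt_dec 0 k) as [Hk|Hk].
  - replace k with (Z.of_nat (Z.to_nat k)) by lia. rewrite <- INR_IZR_INZ.
    replace (x + 2 * PI * INR (Z.to_nat k)) with (x + 2 * INR (Z.to_nat k) * PI) by ring.
    split; [apply cos_period|apply sin_period].
  - replace k with (- Z.of_nat (Z.to_nat (-k)))%Z by lia. rewrite opp_IZR, <- INR_IZR_INZ.
    set (n := Z.to_nat (-k)).
    pose proof (cos_period (x + 2 * PI * - INR n) n) as H1.
    pose proof (sin_period (x + 2 * PI * - INR n) n) as H2.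
    replace (x + 2 * PI * - INR n + 2 * INR n * PI) with x in H1, H2 by ring.
    split; auto.
Qed.

Lemma telescope a (W : R3 -> R) (g : R -> R3) L :
  ps_curve_length a g L ->
  (forall fx fy fz ta tb l, Defs.C1 fx -> Defs.C1 fy -> Defs.C1 fz -> ta <= tb ->
     is_RInt (fun t => h_speed a (fx t, fy t, fz t) (Derive fx t, Derive fy t, Derive fz t)) ta tb l ->
     W (fx tb, fy tb, fz tb) - W (fx ta, fy ta, fz ta) <= l) ->
  W (g 1) - W (g 0) <= L.
Proof.
  intros [n [tt [l [H0 [H1 [Hinc [Hp HL]]]]]]] Hpiece.
  assert (IH : forall k, (k <= n)%nat -> W (g (tt k)) - W (g (tt O)) <= sumR l k).
  { induction k as [|k IHk]; intros Hk.
    - simpl. lra.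
    - simpl. specialize (IHk ltac:(lia)).
      destruct (Hp k ltac:(lia)) as [fx [fy [fz [C1x [C1y [C1z [Heq HI]]]]]]].
      pose proof (Hinc k ltac:(lia)) as Hlt.
      pose proof (Hpiece fx fy fz (tt k) (tt (S k)) (l k) C1x C1y C1z ltac:(lra) HI) as P.
      rewrite <- (Heq (tt k)) in P by lra. rewrite <- (Heq (tt (S k))) in P by lra.
      lra. }
  specialize (IH n (le_n n)). rewrite H1, H0 in IH. rewrite HL. exact IH.
Qed.

Theorem lower_bound a (ha : 0 < a) (hsmall : 2 * a / sqrt 3 < PI / 2) (m : R3) (L : R) :
  (exists g, curve_T a g m (sigma_hex m) L) -> PI <= L.
Proof.
  intros [g [v [[i [j [k Hv]]] [Hg0 [Hg1 Hps]]]]].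
  destruct m as [[x0 y0] z0].
  set (R1 := 2 * a / sqrt 3).
  assert (HR1 : 0 < R1 < PI / 2).
  { split; [|exact hsmall]. unfold R1. pose proof s3_pos. apply Rmult_lt_0_compat; [lra|]. apply Rinv_0_lt_compat; lra. }
  set (d1 := 2 * a * IZR i + a * IZR j). set (d2 := a * sqrt 3 * IZR j).
  assert (Hdel : in_Delta a (d1, d2)) by (exists i, j; reflexivity).
  assert (Hcov : forall x y, dist_Delta a x y <= R1) by (intros; apply dist_Delta_cov; auto).
  set (q0 := (x0 - d1)^2 + (y0 - d2)^2).
  set (A1 := Cg R1 q0 * cos z0). set (A2 := Cg R1 q0 * sin z0).
  set (A3 := Kg R1 q0 * (x0 - d1)). set (A4 := Kg R1 q0 * (y0 - d2)).
  assert (HA : A1^2 + A2^2 + A3^2 + A4^2 = 1).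
  { assert (Hq0 : 0 <= q0) by (unfold q0; pose proof (pow2_ge_0 (x0-d1)); pose proof (pow2_ge_0 (y0-d2)); lra).
    rewrite <- (CK_unit R1 HR1 q0 Hq0).
    pose proof (sin2_cos2 z0) as H. unfold Rsqr in H. unfold A1, A2, A3, A4.
    transitivity (Cg R1 q0 ^2 * (sin z0 * sin z0 + cos z0 * cos z0) + Kg R1 q0^2 * ((x0 - d1)^2 + (y0 - d2)^2)); [ring|].
    rewrite H. fold q0. ring. }
  destruct (Rle_dec PI L) as [|HL]; [auto|exfalso].
  set (eta := Rmin ((PI - L)/4) 1).
  assert (Heta : 0 < eta <= (PI - L)/4 /\ eta <= 1).
  { unfold eta. split; [split|]. apply Rmin_glb_lt; lra. apply Rmin_l. apply Rmin_r. }
  pose proof PI_gt1 as HP1.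
  set (e := cos eta).
  assert (He : 0 < e < 1).
  { unfold e. split. apply cos_gt_0; lra.
    assert (Hc : cos eta < cos 0) by (apply cos_decreasing_1; lra). rewrite cos_0 in Hc. exact Hc. }
  assert (Hacos : acos e = eta) by (unfold e; apply acos_cos; lra).
  pose proof (telescope a (fun p => Vp R1 d1 d2 A1 A2 A3 A4 e (px p) (py p) (pz p)) g L Hps) as T.
  cbv beta in T.
  assert (T2 : Vp R1 d1 d2 A1 A2 A3 A4 e (px (g 1)) (py (g 1)) (pz (g 1)) -
               Vp R1 d1 d2 A1 A2 A3 A4 e (px (g 0)) (py (g 0)) (pz (g 0)) <= L).
  { apply T. intros fx fy fz ta tb l C1x C1y C1z Hab HI.
    unfold px, py, pz. cbn [fst snd].
    exact (piece R1 HR1 d1 d2 A1 A2 A3 A4 e HA He a Hdel Hcov fx fy fz C1x C1y C1z ta tb l Hab HI). }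
  rewrite Hg0, Hg1 in T2. subst v.
  unfold sigma_hex, add3, px, py, pz in T2. cbn [fst snd] in T2.
  unfold Vp, Hp, qq in T2.
  destruct (trig_Zper (z0 + PI) k) as [Ec Es].
  replace (z0 + PI + 2 * PI * IZR k) with (z0 + PI + 2 * PI * IZR k) in T2 by ring.
  rewrite Ec, Es in T2. rewrite neg_cos, neg_sin in T2.
  replace (- x0 + (4 * a * IZR i + 2 * a * IZR j) - d1) with (-(x0 - d1)) in T2 by (unfold d1; ring).
  replace (- y0 + 2 * a * sqrt 3 * IZR j - d2) with (-(y0 - d2)) in T2 by (unfold d2; ring).
  replace ((- (x0 - d1)) ^ 2 + (- (y0 - d2)) ^ 2) with q0 in T2 by (unfold q0; ring).
  replace ((x0 - d1) ^ 2 + (y0 - d2) ^ 2) with q0 in T2 by (unfold q0; ring).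
  replace (A1 * (Cg R1 q0 * - cos z0) + A2 * (Cg R1 q0 * - sin z0) + A3 * (Kg R1 q0 * - (x0 - d1)) +
           A4 * (Kg R1 q0 * - (y0 - d2))) with (-1) in T2
    by (transitivity (-(A1^2+A2^2+A3^2+A4^2)); [rewrite HA; ring|unfold A1, A2, A3, A4; ring]).
  replace (A1 * (Cg R1 q0 * cos z0) + A2 * (Cg R1 q0 * sin z0) + A3 * (Kg R1 q0 * (x0 - d1)) +
           A4 * (Kg R1 q0 * (y0 - d2))) with 1 in T2
    by (transitivity (A1^2+A2^2+A3^2+A4^2); [rewrite HA; ring|unfold A1, A2, A3, A4; ring]).
  replace (e * -1) with (- e) in T2 by ring. rewrite Rmult_1_r in T2.
  rewrite acos_opp, Hacos in T2. lra.
Qed.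


Theorem mainTheorem5 (a : R) (ha : 0 < a) (hsmall : 2 * a / sqrt 3 < PI / 2) :
  forall m : R3,
    dist_T a m (sigma_hex m) >= PI /\
    dist_T a m (sigma_hex m) = PI /\
    (forall c : R * R, in_Voronoi a c (px m, py m) ->
       exists u : R * R,
         fst u ^ 2 + snd u ^ 2 = 1 /\
         (px m, py m) = (fst c + dist2 (px m, py m) c * fst u,
                         snd c + dist2 (px m, py m) c * snd u) /\
         exists g : R -> R3,
           curve_T a g m (sigma_hex m) PI /\
           forall t, 0 <= t <= 1 ->
             in_Voronoi a c (px (g t), py (g t)) /\
             exists s : R, (px (g t), py (g t)) = (fst c + s * fst u, snd c + s * snd u)).
Proof.
  intros [[x y] z0]. unfold px, py. cbn [fst snd].
  assert (Hd : dist_T a (x, y, z0) (sigma_hex (x, y, z0)) = PI).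
  { unfold dist_T. apply glb_eq.
    - destruct (voronoi_ex a x y ha) as [c Hc].
      destruct (geodesic a ha hsmall x y z0 c Hc) as [u [_ [_ [g [Hg _]]]]].
      exists g. exact Hg.
    - intros L HL. exact (lower_bound a ha hsmall _ L HL). }
  split; [lra|]. split; [exact Hd|].
  intros c Hc. exact (geodesic a ha hsmall x y z0 c Hc).
Qed.
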